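(* Let $\alpha=1$ and $\lambda\in\mathbb{N}$. Let $\phi(x;\lambda)$, $\lambda=0,1,2,\dots$, be defined by $\phi(x;0)=1$, $\phi(x;1)=\frac{I_1(x)}{I_0(x)}$ and $$\phi(x;\lambda+1)+\phi(x;\lambda-1)=\frac{2\lambda}{x}\frac{\phi(x;\lambda)}{1-\phi^2(x;\lambda)}.$$ Let $$y(x)=\frac{\phi(x;\lambda+1)}{\phi(x;\lambda)},\qquad R(x)=y'(x)+y^2(x)+\frac{(1-2\lambda)y(x)}{x}+1,\qquad g(s;1,\lambda)=1-\frac{2}{R(\sqrt s)},$$ $$\mathcal{H}(s;1,\lambda)=\frac{(sg'(s;1,\lambda))^2}{4g(s;1,\lambda)(g(s;1,\lambda)-1)^2}-\frac{(\lambda+g(s;1,\lambda))^2}{4g(s;1,\lambda)}+\frac{sg(s;1,\lambda)}{4(g(s;1,\lambda)-1)}.$$ Then $g(s;1,\lambda)$ is a closed-form solution of $$g''=\frac{3g-1}{2g(g-1)}(g')^2-\frac{g'}{s}+\frac{(g-1)^2}{2s^2}\left(g-\frac{\lambda^2}{g}\right)+\frac{g}{2s}$$ (i.e. $P_V(\frac12,-\frac{\lambda^2}{2},\frac12,0)$), and $\mathcal{H}(s;1,\lambda)$ is the corresponding solution of $(s\mathcal{H}'')^2=\mathcal{H}'(4\mathcal{H}'-1)(\mathcal{H}-s\mathcal{H}')+\frac1{16}\left[4(1+\lambda)\mathcal{H}'-\lambda\right]^2$.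
   Context: $I_k$ denotes the modified Bessel function of the first kind of order $k$; primes denote derivatives. *)

(* Defs.v *)
From Stdlib Require Import Reals Arith.
From Coquelicot Require Import Coquelicot.
Open Scope R_scope.

Definition besselI (k : nat) (x : R) : R :=
  Series (fun m : nat => (x / 2) ^ (2 * m + k) / (INR (Factorial.fact m) * INR (Factorial.fact (m + k)))).

(* phi_pair x n = (phi(x;n), phi(x;n+1)), with phi(x;0)=1, phi(x;1)=I_1/I_0 and
   phi(x;l+1) = (2l/x) phi(x;l)/(1-phi(x;l)^2) - phi(x;l-1) for l >= 1. *)
Fixpoint phi_pair (x : R) (n : nat) : R * R :=
  match n with
  | O => (1, besselI 1 x / besselI 0 x)
  | S n' => let (a, b) := phi_pair x n' in
            (b, 2 * INR n / x * (b / (1 - b ^ 2)) - a)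
  end.

Definition phi (x : R) (n : nat) : R := fst (phi_pair x n).

Definition yfun (lam : nat) (x : R) : R := phi x (S lam) / phi x lam.

Definition Rfun (lam : nat) (x : R) : R :=
  Derive (yfun lam) x + (yfun lam x) ^ 2
  + (1 - 2 * INR lam) * yfun lam x / x + 1.

Definition gfun (lam : nat) (s : R) : R := 1 - 2 / Rfun lam (sqrt s).

Definition Hfun (lam : nat) (s : R) : R :=
  let g := gfun lam s in
  (s * Derive (gfun lam) s) ^ 2 / (4 * g * (g - 1) ^ 2)
  - (INR lam + g) ^ 2 / (4 * g)
  + s * g / (4 * (g - 1)).

(* Non-degeneracy at s: s > 0 and all denominators occurring in the
   construction of phi, y, R, g and in the Painleve equations are nonzero. *)
Definition regular_at (lam : nat) (s : R) : Prop :=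
  0 < s /\
  besselI 0 (sqrt s) <> 0 /\
  (forall k : nat, (1 <= k <= lam)%nat -> 1 - (phi (sqrt s) k) ^ 2 <> 0) /\
  phi (sqrt s) lam <> 0 /\
  Rfun lam (sqrt s) <> 0 /\
  gfun lam s <> 0 /\
  gfun lam s <> 1.

(* Main.v *)
Require Import Defs.
From Stdlib Require Import Reals Lra Lia Arith.
From Coquelicot Require Import Coquelicot.
Open Scope R_scope.

Definition a0 (m : nat) : R := / (INR (fact m) * INR (fact m)).
Definition a1 (m : nat) : R := / (INR (fact m) * INR (fact (S m))).

Lemma fact_pos' n : 0 < INR (fact n).
Proof. apply lt_0_INR, lt_O_fact. Qed.

Lemma factS n : INR (fact (S n)) = INR (S n) * INR (fact n).
Proof. change (fact (S n)) with (S n * fact n)%nat. apply mult_INR. Qed.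

Lemma lim_invS : is_lim_seq (fun n => / INR (S n)) 0.
Proof.
  apply (is_lim_seq_incr_1 (fun n => / INR n)).
  replace (Finite 0) with (Rbar_inv p_infty) by reflexivity.
  apply is_lim_seq_inv. apply is_lim_seq_INR. discriminate.
Qed.

Lemma ratio_bound (a : nat -> R) (c : nat -> R) :
  (forall n, a n <> 0) ->
  (forall n, Rabs (a (S n) / a n) <= / INR (S n)) ->
  CV_radius a = p_infty.
Proof.
  intros Hn Hb. apply CV_radius_infinite_DAlembert; auto.
  apply is_lim_seq_le_le with (u := fun _ => 0) (w := fun n => / INR (S n)).
  - intros n; split; [apply Rabs_pos | apply Hb].
  - apply is_lim_seq_const.
  - apply lim_invS.
Qed.

Lemma INRS_ge1 n : 1 <= INR (S n).
Proof. rewrite S_INR. pose proof (pos_INR n). lra. Qed.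

Lemma rad_a0 : CV_radius a0 = p_infty.
Proof.
  apply (ratio_bound a0 a0).
  - intros n. unfold a0. apply Rinv_neq_0_compat. pose proof (fact_pos' n). nra.
  - intros n. unfold a0. rewrite factS.
    pose proof (fact_pos' n). pose proof (INRS_ge1 n).
    replace (/ (INR (S n) * INR (fact n) * (INR (S n) * INR (fact n))) / / (INR (fact n) * INR (fact n)))
      with (/ INR (S n) * / INR (S n)) by (field; lra).
    assert (0 < / INR (S n)) by (apply Rinv_0_lt_compat; lra).
    assert (/ INR (S n) <= 1) by (rewrite <- Rinv_1; apply Rinv_le_contravar; lra).
    assert (0 < / INR (S (S n))) by (apply Rinv_0_lt_compat; pose proof (INRS_ge1 (S n)); lra).
    assert (/ INR (S (S n)) <= 1) by (rewrite <- Rinv_1; apply Rinv_le_contravar; pose proof (INRS_ge1 (S n)); lra).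
    rewrite Rabs_pos_eq; nra.
Qed.

Lemma rad_a1 : CV_radius a1 = p_infty.
Proof.
  apply (ratio_bound a1 a1).
  - intros n. unfold a1. apply Rinv_neq_0_compat. pose proof (fact_pos' n). pose proof (fact_pos' (S n)). nra.
  - intros n. unfold a1. rewrite (factS (S n)), (factS n).
    pose proof (fact_pos' n). pose proof (INRS_ge1 n). pose proof (INRS_ge1 (S n)).
    replace (/ (INR (S n) * INR (fact n) * (INR (S (S n)) * (INR (S n) * INR (fact n)))) / / (INR (fact n) * (INR (S n) * INR (fact n))))
      with (/ INR (S n) * / INR (S (S n))) by (field; lra).
    assert (0 < / INR (S n)) by (apply Rinv_0_lt_compat; lra).
    assert (/ INR (S n) <= 1) by (rewrite <- Rinv_1; apply Rinv_le_contravar; lra).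
    assert (0 < / INR (S (S n))) by (apply Rinv_0_lt_compat; pose proof (INRS_ge1 (S n)); lra).
    assert (/ INR (S (S n)) <= 1) by (rewrite <- Rinv_1; apply Rinv_le_contravar; pose proof (INRS_ge1 (S n)); lra).
    rewrite Rabs_pos_eq; nra.
Qed.

Lemma inside a x : CV_radius a = p_infty -> Rbar_lt (Rabs x) (CV_radius a).
Proof. intros H; rewrite H; exact I. Qed.

Lemma I0_eq x : besselI 0 x = PSeries a0 (x^2/4).
Proof.
  unfold besselI, PSeries. apply Series_ext. intros m.
  rewrite !Nat.add_0_r, pow_mult. unfold a0.
  replace ((x/2)^2) with (x^2/4) by field. unfold Rdiv. ring.
Qed.

Lemma I1_eq x : besselI 1 x = x / 2 * PSeries a1 (x^2/4).
Proof.
  unfold besselI, PSeries. rewrite <- Series_scal_l. apply Series_ext. intros m.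
  rewrite pow_add, pow_mult, Nat.add_1_r. unfold a1.
  replace ((x/2)^2) with (x^2/4) by field. unfold Rdiv. ring.
Qed.

Lemma deriv_a0 n : PS_derive a0 n = a1 n.
Proof.
  unfold PS_derive, a0, a1. rewrite (factS n).
  pose proof (fact_pos' n). pose proof (INRS_ge1 n). field. lra.
Qed.

Lemma plusR (a b : R) : plus a b = a + b.
Proof. reflexivity. Qed.

Lemma a0_a1 z : PSeries a0 z = PSeries a1 z + z * PSeries (PS_derive a1) z.
Proof.
  rewrite (PSeries_decr_1 a0), (PSeries_decr_1 a1) by (apply CV_radius_inside, inside; auto using rad_a0, rad_a1).
  assert (E : PSeries (PS_decr_1 a0) z = PSeries (PS_decr_1 a1) z + PSeries (PS_derive a1) z).
  { rewrite <- PSeries_plus.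
    - apply PSeries_ext. intros n. unfold PS_decr_1, PS_plus, PS_derive. rewrite plusR. unfold a0, a1.
      rewrite (factS (S n)), (factS n).
      pose proof (fact_pos' n). pose proof (INRS_ge1 n). pose proof (INRS_ge1 (S n)).
      rewrite !S_INR in *. field. lra.
    - apply CV_radius_inside. rewrite CV_radius_decr_1. apply inside, rad_a1.
    - apply ex_pseries_derive. apply inside, rad_a1. }
  rewrite E. unfold a0, a1. simpl. field.
Qed.

Lemma comp_R (f g : R -> R) x df dg : is_derive f (g x) df -> is_derive g x dg ->
  is_derive (fun t => f (g t)) x (dg * df).
Proof. intros A B. exact (is_derive_comp f g x df dg A B). Qed.

Lemma I0_deriv x : is_derive (besselI 0) x (besselI 1 x).
Proof.
  apply is_derive_ext with (f := fun x => PSeries a0 (x^2/4)).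
  { intros t. symmetry. apply I0_eq. }
  rewrite I1_eq.
  apply is_derive_ext with (f := fun x => PSeries a0 ((fun y => y^2/4) x)). reflexivity.
  replace (x / 2 * PSeries a1 (x ^ 2 / 4)) with ((x/2) * PSeries (PS_derive a0) (x^2/4)).
  2: { f_equal. apply PSeries_ext, deriv_a0. }
  apply (comp_R (PSeries a0) (fun y => y^2/4)).
  - apply is_derive_PSeries, inside, rad_a0.
  - auto_derive; auto. field.
Qed.

Lemma I1_deriv x : x <> 0 -> is_derive (besselI 1) x (besselI 0 x - besselI 1 x / x).
Proof.
  intros Hx.
  apply is_derive_ext with (f := fun x => x / 2 * PSeries a1 (x^2/4)).
  { intros t. symmetry. apply I1_eq. }
  rewrite I0_eq, I1_eq, a0_a1.
  assert (D : is_derive (fun x => PSeries a1 (x^2/4)) x (x/2 * PSeries (PS_derive a1) (x^2/4))).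
  { apply (comp_R (PSeries a1) (fun y => y^2/4)).
    - apply is_derive_PSeries, inside, rad_a1.
    - auto_derive; auto. field. }
  assert (D2 : is_derive (fun t : R => t / 2) x (/2)) by (auto_derive; auto; field).
  pose proof (is_derive_mult (fun t => t/2) (fun t => PSeries a1 (t^2/4)) x _ _ D2 D Rmult_comm) as M.
  replace (PSeries a1 (x ^ 2 / 4) + x ^ 2 / 4 * PSeries (PS_derive a1) (x ^ 2 / 4) - x / 2 * PSeries a1 (x ^ 2 / 4) / x)
    with (/2 * PSeries a1 (x^2/4) + x/2 * (x/2 * PSeries (PS_derive a1) (x^2/4))) by (field; auto).
  exact M.
Qed.

Definition Aex (L x u v : R) := L * u - x * (1 - u^2) * v.
Definition Bex (L x u v : R) := x * (1 - v^2) * u - (L + 1) * v.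
Definition Nex (L x u v : R) := v * (x * v - x * u^2 * v - 2 * L * u).
Definition Dex (L x u v : R) := Nex L x u v + x * u^2.
Definition gex (L x u v : R) := Nex L x u v / Dex L x u v.
Definition W1ex (L x u v : R) :=
  4 * L * (L + 1) * u^2 * v - 2 * x * u * v^2 * (1 + 3 * L) * (1 - u^2)
  - 2 * x * L * u^3 + 2 * x^2 * v * (1 - u^2) * (v^2 * (1 - u^2) + u^2).
Definition g1ex (L x u v : R) := u * W1ex L x u v / (2 * x * (Dex L x u v)^2).
Definition Hex (L x u v : R) := x^2 * (1 - u^2) * (1 - v^2) / 4 + x * v * ((L + 1) * u^2 - 1) / (2 * u).
Definition H1ex (L x u v : R) := v * (2 * L * u - x * v * (1 - u^2)) / (4 * x * u^2).
Definition H2ex (L x u v : R) := - W1ex L x u v / (8 * x^3 * u^3).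

Ltac split_zero := repeat match goal with H : _ * _ = 0 |- _ => apply Rmult_integral in H; destruct H as [H|H] end.
Ltac nz_goal := let H := fresh "Hz" in intro H; split_zero;
  first [ lra
        | match goal with HH : ?A <> 0, H : ?B = 0 |- _ => apply HH; replace A with B by ring; exact H end
        | match goal with HH : ?A <> 0, H : ?B = 0 |- _ => apply HH; replace A with (-B) by ring; rewrite H; ring end
        | match goal with H : / ?B = 0 |- _ => apply Rinv_neq_0_compat in H; [exact H|] ; nz_goal end ].
Ltac side := repeat split; try (eexists; eassumption); try assumption; try nz_goal.

Lemma core_g1 (L : R) (U V : R -> R) (s : R) (Hs : 0 < s)
  (HU : is_derive U s (Aex L (sqrt s) (U s) (V s) / (2 * s)))
  (HV : is_derive V s (Bex L (sqrt s) (U s) (V s) / (2 * s)))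
  (Hu : U s <> 0) (HD : Dex L (sqrt s) (U s) (V s) <> 0) (HN : Nex L (sqrt s) (U s) (V s) <> 0) : is_derive (fun t => gex L (sqrt t) (U t) (V t)) s (g1ex L (sqrt s) (U s) (V s)).
Proof.
unfold gex, g1ex, W1ex, Dex, Nex.
unfold Dex, Nex in HD.
assert (EU : Derive (fun x => U x) s = Aex L (sqrt s) (U s) (V s) / (2 * s)) by exact (is_derive_unique _ _ _ HU).
assert (EV : Derive (fun x => V x) s = Bex L (sqrt s) (U s) (V s) / (2 * s)) by exact (is_derive_unique _ _ _ HV).
assert (Hx : sqrt s <> 0) by (apply Rgt_not_eq, sqrt_lt_R0; lra).
auto_derive.
all: try (side; fail).
rewrite ?EU, ?EV.
  unfold Aex, Bex.
  assert (Hxx : s = sqrt s * sqrt s) by (symmetry; apply sqrt_sqrt; lra).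
  set (x := sqrt s) in *. set (u := U s) in *. set (v := V s) in *.
  clearbody x u v. clear EU EV HU HV. rewrite ?Hxx.
  assert (Hxu : x * u ^ 2 <> 0) by (apply Rmult_integral_contrapositive_currified; [exact Hx| apply pow_nonzero; exact Hu]).
  try (destruct (Rmult_neq_0_reg _ _ HN) as [Hv HM]).
  field. repeat split; try nz_goal; auto.
Qed.
Lemma core_g2 (L : R) (U V : R -> R) (s : R) (Hs : 0 < s)
  (HU : is_derive U s (Aex L (sqrt s) (U s) (V s) / (2 * s)))
  (HV : is_derive V s (Bex L (sqrt s) (U s) (V s) / (2 * s)))
  (Hu : U s <> 0) (HD : Dex L (sqrt s) (U s) (V s) <> 0) (HN : Nex L (sqrt s) (U s) (V s) <> 0) : is_derive (fun t => g1ex L (sqrt t) (U t) (V t)) s ((3 * gex L (sqrt s) (U s) (V s) - 1) / (2 * gex L (sqrt s) (U s) (V s) * (gex L (sqrt s) (U s) (V s) - 1)) * g1ex L (sqrt s) (U s) (V s) ^ 2 - g1ex L (sqrt s) (U s) (V s) / s + (gex L (sqrt s) (U s) (V s) - 1) ^ 2 / (2 * s ^ 2) * (gex L (sqrt s) (U s) (V s) - L ^ 2 / gex L (sqrt s) (U s) (V s)) + gex L (sqrt s) (U s) (V s) / (2 * s)).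
Proof.
unfold Nex in HN.
unfold gex, g1ex, W1ex, Dex, Nex.
unfold Dex, Nex in HD.
assert (EU : Derive (fun x => U x) s = Aex L (sqrt s) (U s) (V s) / (2 * s)) by exact (is_derive_unique _ _ _ HU).
assert (EV : Derive (fun x => V x) s = Bex L (sqrt s) (U s) (V s) / (2 * s)) by exact (is_derive_unique _ _ _ HV).
assert (Hx : sqrt s <> 0) by (apply Rgt_not_eq, sqrt_lt_R0; lra).
auto_derive.
all: try (side; fail).
rewrite ?EU, ?EV.
  unfold Aex, Bex.
  assert (Hxx : s = sqrt s * sqrt s) by (symmetry; apply sqrt_sqrt; lra).
  set (x := sqrt s) in *. set (u := U s) in *. set (v := V s) in *.
  clearbody x u v. clear EU EV HU HV. rewrite ?Hxx.
  assert (Hxu : x * u ^ 2 <> 0) by (apply Rmult_integral_contrapositive_currified; [exact Hx| apply pow_nonzero; exact Hu]).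
  try (destruct (Rmult_neq_0_reg _ _ HN) as [Hv HM]).
  field. all: repeat split; try nz_goal.
Qed.
Lemma core_H1 (L : R) (U V : R -> R) (s : R) (Hs : 0 < s)
  (HU : is_derive U s (Aex L (sqrt s) (U s) (V s) / (2 * s)))
  (HV : is_derive V s (Bex L (sqrt s) (U s) (V s) / (2 * s)))
  (Hu : U s <> 0) (HD : Dex L (sqrt s) (U s) (V s) <> 0) (HN : Nex L (sqrt s) (U s) (V s) <> 0) : is_derive (fun t => Hex L (sqrt t) (U t) (V t)) s (H1ex L (sqrt s) (U s) (V s)).
Proof.
unfold Hex, H1ex.
unfold Dex, Nex in HD.
assert (EU : Derive (fun x => U x) s = Aex L (sqrt s) (U s) (V s) / (2 * s)) by exact (is_derive_unique _ _ _ HU).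
assert (EV : Derive (fun x => V x) s = Bex L (sqrt s) (U s) (V s) / (2 * s)) by exact (is_derive_unique _ _ _ HV).
assert (Hx : sqrt s <> 0) by (apply Rgt_not_eq, sqrt_lt_R0; lra).
auto_derive.
all: try (side; fail).
rewrite ?EU, ?EV.
  unfold Aex, Bex.
  assert (Hxx : s = sqrt s * sqrt s) by (symmetry; apply sqrt_sqrt; lra).
  set (x := sqrt s) in *. set (u := U s) in *. set (v := V s) in *.
  clearbody x u v. clear EU EV HU HV. rewrite ?Hxx.
  assert (Hxu : x * u ^ 2 <> 0) by (apply Rmult_integral_contrapositive_currified; [exact Hx| apply pow_nonzero; exact Hu]).
  try (destruct (Rmult_neq_0_reg _ _ HN) as [Hv HM]).
  field. repeat split; try nz_goal; auto.
Qed.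
Lemma core_H2 (L : R) (U V : R -> R) (s : R) (Hs : 0 < s)
  (HU : is_derive U s (Aex L (sqrt s) (U s) (V s) / (2 * s)))
  (HV : is_derive V s (Bex L (sqrt s) (U s) (V s) / (2 * s)))
  (Hu : U s <> 0) (HD : Dex L (sqrt s) (U s) (V s) <> 0) (HN : Nex L (sqrt s) (U s) (V s) <> 0) : is_derive (fun t => H1ex L (sqrt t) (U t) (V t)) s (H2ex L (sqrt s) (U s) (V s)).
Proof.
unfold H1ex, H2ex, W1ex.
unfold Dex, Nex in HD.
assert (EU : Derive (fun x => U x) s = Aex L (sqrt s) (U s) (V s) / (2 * s)) by exact (is_derive_unique _ _ _ HU).
assert (EV : Derive (fun x => V x) s = Bex L (sqrt s) (U s) (V s) / (2 * s)) by exact (is_derive_unique _ _ _ HV).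
assert (Hx : sqrt s <> 0) by (apply Rgt_not_eq, sqrt_lt_R0; lra).
auto_derive.
all: try (side; fail).
rewrite ?EU, ?EV.
  unfold Aex, Bex.
  assert (Hxx : s = sqrt s * sqrt s) by (symmetry; apply sqrt_sqrt; lra).
  set (x := sqrt s) in *. set (u := U s) in *. set (v := V s) in *.
  clearbody x u v. clear EU EV HU HV. rewrite ?Hxx.
  assert (Hxu : x * u ^ 2 <> 0) by (apply Rmult_integral_contrapositive_currified; [exact Hx| apply pow_nonzero; exact Hu]).
  try (destruct (Rmult_neq_0_reg _ _ HN) as [Hv HM]).
  field. repeat split; try nz_goal; auto.
Qed.



Lemma Hid (L x u v s : R) : 0 < x -> s = x ^ 2 -> u <> 0 -> Dex L x u v <> 0 -> Nex L x u v <> 0 ->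
  (s * g1ex L x u v) ^ 2 / (4 * gex L x u v * (gex L x u v - 1) ^ 2) - (L + gex L x u v) ^ 2 / (4 * gex L x u v)
  + s * gex L x u v / (4 * (gex L x u v - 1))
  = Hex L x u v.
Proof.
intros Hx Hs Hu HD HN. subst s. unfold gex, g1ex, Hex, W1ex. unfold Dex, Nex in *.
assert (Hx' : x <> 0) by lra.
assert (Hxu : x * u ^ 2 <> 0) by (apply Rmult_integral_contrapositive_currified; [exact Hx'| apply pow_nonzero; exact Hu]).
destruct (Rmult_neq_0_reg _ _ HN) as [Hv HM].
field. all: repeat split; try nz_goal.
Qed.

Lemma Hode (L x u v s : R) : 0 < x -> s = x ^ 2 -> u <> 0 ->
  (s * H2ex L x u v)^2 = H1ex L x u v * (4 * H1ex L x u v - 1) * (Hex L x u v - s * H1ex L x u v)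
     + / 16 * (4 * (1 + L) * H1ex L x u v - L) ^ 2.
Proof.
intros Hx Hs Hu. subst s. unfold Hex, H1ex, H2ex, W1ex. field. split; lra || auto.
Qed.

Lemma pp_S x n : phi_pair x (S n) =
  (snd (phi_pair x n), 2 * INR (S n) / x * (snd (phi_pair x n) / (1 - snd (phi_pair x n) ^ 2)) - fst (phi_pair x n)).
Proof.
  change (phi_pair x (S n)) with (let (a, b) := phi_pair x n in (b, 2 * INR (S n) / x * (b / (1 - b ^ 2)) - a)).
  destruct (phi_pair x n); reflexivity.
Qed.

Lemma step_lemma (L x : R) (A B : R -> R) : 0 < x ->
  is_derive A x (Aex L x (A x) (B x) / x) -> is_derive B x (Bex L x (A x) (B x) / x) ->
  1 - B x ^ 2 <> 0 ->
  is_derive (fun z => 2 * (L + 1) / z * (B z / (1 - B z ^ 2)) - A z) x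
    (Bex (L + 1) x (B x) (2 * (L + 1) / x * (B x / (1 - B x ^ 2)) - A x) / x).
Proof.
  intros Hx HA HB Hb.
  assert (EA : Derive (fun z => A z) x = Aex L x (A x) (B x) / x) by exact (is_derive_unique _ _ _ HA).
  assert (EB : Derive (fun z => B z) x = Bex L x (A x) (B x) / x) by exact (is_derive_unique _ _ _ HB).
  assert (Hx' : x <> 0) by lra.
  auto_derive.
  all: try (side; fail).
  rewrite ?EA, ?EB. unfold Aex, Bex.
  set (a := A x) in *. set (b := B x) in *. clearbody a b.
  field. all: repeat split; try nz_goal.
Qed.

Lemma phi_deriv n : forall x, 0 < x -> besselI 0 x <> 0 ->
  (forall k, (1 <= k <= n)%nat -> 1 - phi x k ^ 2 <> 0) ->
  is_derive (fun z => fst (phi_pair z n)) x (Aex (INR n) x (fst (phi_pair x n)) (snd (phi_pair x n)) / x) /\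
  is_derive (fun z => snd (phi_pair z n)) x (Bex (INR n) x (fst (phi_pair x n)) (snd (phi_pair x n)) / x).
Proof.
  induction n as [|n IH]; intros x Hx HI Hk.
  - simpl fst; simpl snd. split.
    + replace (Aex (INR 0) x 1 (besselI 1 x / besselI 0 x) / x) with 0
        by (unfold Aex; simpl INR; field; lra).
      auto_derive; auto.
    + assert (E1 : Derive (fun z => besselI 1 z) x = besselI 0 x - besselI 1 x / x)
        by (apply is_derive_unique, I1_deriv; lra).
      assert (E0 : Derive (fun z => besselI 0 z) x = besselI 1 x)
        by (apply is_derive_unique, I0_deriv).
      auto_derive.
      * repeat split; auto. exists (besselI 0 x - besselI 1 x / x); apply I1_deriv; lra.
        exists (besselI 1 x); apply I0_deriv.
      * rewrite E1, E0. unfold Bex. simpl INR. field. split; auto; lra.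
  - assert (Hk' : forall k, (1 <= k <= n)%nat -> 1 - phi x k ^ 2 <> 0)
      by (intros k Hk1; apply Hk; lia).
    destruct (IH x Hx HI Hk') as [HA HB].
    assert (Hb : 1 - snd (phi_pair x n) ^ 2 <> 0).
    { replace (snd (phi_pair x n)) with (phi x (S n)) by (unfold phi; rewrite pp_S; reflexivity).
      apply Hk; lia. }
    rewrite pp_S. cbn [fst snd]. split.
    + apply is_derive_ext with (f := fun z => snd (phi_pair z n)).
      { intros t. rewrite pp_S. reflexivity. }
      cbn [fst].
      replace (Aex (INR (S n)) x (snd (phi_pair x n))
               (2 * INR (S n) / x * (snd (phi_pair x n) / (1 - snd (phi_pair x n) ^ 2)) - fst (phi_pair x n)) / x)
        with (Bex (INR n) x (fst (phi_pair x n)) (snd (phi_pair x n)) / x).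
      exact HB.
      unfold Aex, Bex. rewrite S_INR. field. split; auto; lra.
    + apply is_derive_ext with (f := fun z => 2 * (INR n + 1) / z * (snd (phi_pair z n) / (1 - snd (phi_pair z n) ^ 2)) - fst (phi_pair z n)).
      { intros t. rewrite pp_S, S_INR. reflexivity. }
      cbn [snd]. rewrite S_INR.
      exact (step_lemma (INR n) x (fun z => fst (phi_pair z n)) (fun z => snd (phi_pair z n)) Hx HA HB Hb).
Qed.

Definition Uf lam t := fst (phi_pair (sqrt t) lam).
Definition Vf lam t := snd (phi_pair (sqrt t) lam).

Lemma sqrt_pos' t : 0 < t -> 0 < sqrt t.
Proof. intros; apply sqrt_lt_R0; auto. Qed.

Lemma UV_deriv lam t : regular_at lam t ->
  is_derive (Uf lam) t (Aex (INR lam) (sqrt t) (Uf lam t) (Vf lam t) / (2 * t)) /\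
  is_derive (Vf lam) t (Bex (INR lam) (sqrt t) (Uf lam t) (Vf lam t) / (2 * t)).
Proof.
  intros [Ht [HI [Hk _]]].
  pose proof (sqrt_pos' t Ht) as Hx.
  destruct (phi_deriv lam (sqrt t) Hx HI Hk) as [HA HB].
  assert (Hsq : is_derive sqrt t (/ (2 * sqrt t))).
  { auto_derive; [lra | field; lra]. }
  assert (Et : 2 * t = 2 * (sqrt t * sqrt t)) by (rewrite sqrt_sqrt; lra).
  split.
  - pose proof (comp_R (fun z => fst (phi_pair z lam)) sqrt t _ _ HA Hsq) as C.
    unfold Uf, Vf. rewrite Et.
    replace (Aex (INR lam) (sqrt t) (fst (phi_pair (sqrt t) lam)) (snd (phi_pair (sqrt t) lam)) / (2 * (sqrt t * sqrt t)))
      with (/ (2 * sqrt t) * (Aex (INR lam) (sqrt t) (fst (phi_pair (sqrt t) lam)) (snd (phi_pair (sqrt t) lam)) / sqrt t))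
      by (field; lra).
    exact C.
  - pose proof (comp_R (fun z => snd (phi_pair z lam)) sqrt t _ _ HB Hsq) as C.
    unfold Uf, Vf. rewrite Et.
    replace (Bex (INR lam) (sqrt t) (fst (phi_pair (sqrt t) lam)) (snd (phi_pair (sqrt t) lam)) / (2 * (sqrt t * sqrt t)))
      with (/ (2 * sqrt t) * (Bex (INR lam) (sqrt t) (fst (phi_pair (sqrt t) lam)) (snd (phi_pair (sqrt t) lam)) / sqrt t))
      by (field; lra).
    exact C.
Qed.

Lemma quot_lemma L x (U V : R -> R) : 0 < x ->
  is_derive U x (Aex L x (U x) (V x) / x) -> is_derive V x (Bex L x (U x) (V x) / x) -> U x <> 0 ->
  is_derive (fun z => V z / U z) x
    (2 * Dex L x (U x) (V x) / (x * U x ^ 2) - (V x / U x) ^ 2 - (1 - 2 * L) * (V x / U x) / x - 1).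
Proof.
  intros Hx HA HB Hu.
  assert (EA : Derive (fun z => U z) x = Aex L x (U x) (V x) / x) by exact (is_derive_unique _ _ _ HA).
  assert (EB : Derive (fun z => V z) x = Bex L x (U x) (V x) / x) by exact (is_derive_unique _ _ _ HB).
  assert (Hx' : x <> 0) by lra.
  auto_derive.
  all: try (side; fail).
  rewrite ?EA, ?EB. unfold Aex, Bex, Dex, Nex.
  set (a := U x) in *. set (b := V x) in *. clearbody a b.
  field. all: repeat split; try nz_goal.
Qed.

Lemma R_eq lam x : 0 < x -> besselI 0 x <> 0 ->
  (forall k, (1 <= k <= lam)%nat -> 1 - phi x k ^ 2 <> 0) -> phi x lam <> 0 ->
  Rfun lam x = 2 * Dex (INR lam) x (fst (phi_pair x lam)) (snd (phi_pair x lam)) / (x * fst (phi_pair x lam) ^ 2).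
Proof.
  intros Hx HI Hk Hu.
  destruct (phi_deriv lam x Hx HI Hk) as [HA HB].
  pose proof (quot_lemma (INR lam) x (fun z => fst (phi_pair z lam)) (fun z => snd (phi_pair z lam)) Hx HA HB Hu) as Q.
  assert (Ey : forall z, yfun lam z = snd (phi_pair z lam) / fst (phi_pair z lam)).
  { intros z. unfold yfun, phi. rewrite pp_S. reflexivity. }
  unfold Rfun.
  assert (DY : Derive (yfun lam) x = 2 * Dex (INR lam) x (fst (phi_pair x lam)) (snd (phi_pair x lam)) / (x * fst (phi_pair x lam) ^ 2)
     - (snd (phi_pair x lam) / fst (phi_pair x lam)) ^ 2
     - (1 - 2 * INR lam) * (snd (phi_pair x lam) / fst (phi_pair x lam)) / x - 1).
  { rewrite (Derive_ext _ _ x Ey). apply is_derive_unique. exact Q. }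
  rewrite DY, Ey. ring.
Qed.

Lemma g_eq lam t : regular_at lam t ->
  gfun lam t = gex (INR lam) (sqrt t) (Uf lam t) (Vf lam t) /\
  Uf lam t <> 0 /\ Dex (INR lam) (sqrt t) (Uf lam t) (Vf lam t) <> 0 /\
  Nex (INR lam) (sqrt t) (Uf lam t) (Vf lam t) <> 0.
Proof.
  intros [Ht [HI [Hk [Hu [HR [Hg0 Hg1]]]]]].
  pose proof (sqrt_pos' t Ht) as Hx.
  pose proof (R_eq lam (sqrt t) Hx HI Hk Hu) as ER.
  unfold phi in Hu.
  fold (Uf lam t) (Vf lam t) in ER, Hu.
  assert (HD : Dex (INR lam) (sqrt t) (Uf lam t) (Vf lam t) <> 0).
  { intros E. apply HR. rewrite ER, E. field. repeat split; try lra; auto; try (apply pow_nonzero; auto). }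
  assert (Eg : gfun lam t = gex (INR lam) (sqrt t) (Uf lam t) (Vf lam t)).
  { unfold gfun. rewrite ER. unfold gex. unfold Dex in *. field.
    repeat split; try lra; auto; try (apply pow_nonzero; auto). }
  repeat split; auto.
  intros E. apply Hg0. rewrite Eg. unfold gex. rewrite E. field. auto.
Qed.

Theorem theorem11 (lam : nat) (s : R) :
  (exists eps : R, 0 < eps /\
     forall t : R, Rabs (t - s) < eps -> regular_at lam t) ->
  let g := gfun lam in
  let H := Hfun lam in
  (ex_derive g s /\ ex_derive (Derive g) s /\
   Derive (Derive g) s =
     (3 * g s - 1) / (2 * g s * (g s - 1)) * (Derive g s) ^ 2
     - Derive g s / s
     + (g s - 1) ^ 2 / (2 * s ^ 2) * (g s - INR lam ^ 2 / g s)
     + g s / (2 * s)) /\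
  (ex_derive H s /\ ex_derive (Derive H) s /\
   (s * Derive (Derive H) s) ^ 2 =
     Derive H s * (4 * Derive H s - 1) * (H s - s * Derive H s)
     + / 16 * (4 * (1 + INR lam) * Derive H s - INR lam) ^ 2).
Proof.
  intros [eps [Heps Hreg]]. cbv zeta.
  set (P := fun t => Rabs (t - s) < eps).
  assert (loc : forall t, P t -> locally t P).
  { intros t Pt. assert (Hr : 0 < eps - Rabs (t - s)) by (unfold P in Pt; lra).
    exists (mkposreal _ Hr). intros z Hz. change (Rabs (z - t) < eps - Rabs (t - s)) in Hz.
    unfold P. replace (z - s) with ((z - t) + (t - s)) by ring.
    pose proof (Rabs_triang (z - t) (t - s)). lra. }
  assert (Ps : P s) by (unfold P; rewrite Rminus_diag, Rabs_R0; lra).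
  set (L := INR lam).
  assert (F : forall t, P t ->
    0 < t /\
    is_derive (Uf lam) t (Aex L (sqrt t) (Uf lam t) (Vf lam t) / (2 * t)) /\
    is_derive (Vf lam) t (Bex L (sqrt t) (Uf lam t) (Vf lam t) / (2 * t)) /\
    gfun lam t = gex L (sqrt t) (Uf lam t) (Vf lam t) /\
    Uf lam t <> 0 /\ Dex L (sqrt t) (Uf lam t) (Vf lam t) <> 0 /\
    Nex L (sqrt t) (Uf lam t) (Vf lam t) <> 0).
  { intros t Pt. pose proof (Hreg t Pt) as Rg.
    destruct (UV_deriv lam t Rg) as [A B]. destruct (g_eq lam t Rg) as [C [D [E G]]].
    destruct Rg as [Ht _]. exact (conj Ht (conj A (conj B (conj C (conj D (conj E G)))))). }
  assert (G1 : forall t, P t -> is_derive (gfun lam) t (g1ex L (sqrt t) (Uf lam t) (Vf lam t))).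
  { intros t Pt. destruct (F t Pt) as [Ht [HU [HV [_ [Hu [HD HN]]]]]].
    apply is_derive_ext_loc with (f := fun z => gex L (sqrt z) (Uf lam z) (Vf lam z)).
    - apply (filter_imp P); [ | apply loc; auto]. intros z Pz. symmetry. apply (F z Pz).
    - apply core_g1; auto. }
  assert (DG : forall t, P t -> Derive (gfun lam) t = g1ex L (sqrt t) (Uf lam t) (Vf lam t)).
  { intros t Pt. apply is_derive_unique, G1, Pt. }
  destruct (F s Ps) as [Hs [HU [HV [Eg [Hu [HD HN]]]]]].
  assert (G2 := core_g2 L (Uf lam) (Vf lam) s Hs HU HV Hu HD HN).
  apply is_derive_ext_loc with (g := Derive (gfun lam)) in G2.
  2: { apply (filter_imp P); [ | apply loc; auto]. intros z Pz. symmetry. apply DG, Pz. }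
  assert (HE : forall t, P t -> Hfun lam t = Hex L (sqrt t) (Uf lam t) (Vf lam t)).
  { intros t Pt. destruct (F t Pt) as [Ht [_ [_ [Egt [Hut [HDt HNt]]]]]].
    unfold Hfun. cbv zeta. rewrite DG, Egt by auto.
    apply Hid; auto. apply sqrt_pos'; auto. symmetry; apply pow2_sqrt; lra. }
  assert (H1 : forall t, P t -> is_derive (Hfun lam) t (H1ex L (sqrt t) (Uf lam t) (Vf lam t))).
  { intros t Pt. destruct (F t Pt) as [Ht [HUt [HVt [_ [Hut [HDt HNt]]]]]].
    apply is_derive_ext_loc with (f := fun z => Hex L (sqrt z) (Uf lam z) (Vf lam z)).
    - apply (filter_imp P); [ | apply loc; auto]. intros z Pz. symmetry. apply HE, Pz.
    - apply core_H1; auto. }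
  assert (DH : forall t, P t -> Derive (Hfun lam) t = H1ex L (sqrt t) (Uf lam t) (Vf lam t)).
  { intros t Pt. apply is_derive_unique, H1, Pt. }
  assert (H2 := core_H2 L (Uf lam) (Vf lam) s Hs HU HV Hu HD HN).
  apply is_derive_ext_loc with (g := Derive (Hfun lam)) in H2.
  2: { apply (filter_imp P); [ | apply loc; auto]. intros z Pz. symmetry. apply DH, Pz. }
  split; [split; [|split] | split; [|split]].
  - eexists; apply G1, Ps.
  - eexists; exact G2.
  - rewrite (is_derive_unique _ _ _ G2), DG, Eg by auto. reflexivity.
  - eexists; apply H1, Ps.
  - eexists; exact H2.
  - rewrite (is_derive_unique _ _ _ H2), DH, HE by auto.
    apply Hode; auto. apply sqrt_pos'; auto. symmetry; apply pow2_sqrt; lra.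
Qed.
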